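(* Let $n\ge p\ge1$, $0<\varepsilon<1$, $\lambda>0$, $\tilde a>0$. Define $$K(\lambda,\varepsilon,a,d)=\frac{\lambda(1-\varepsilon)d+a\sqrt{(\varepsilon-d)/2}}{a^2+\lambda^2(1+\varepsilon)d^2},\qquad Q(\lambda,\varepsilon,\tilde a)=\inf_{a\in(0,\tilde a],\,d\in(0,\varepsilon]}K(\lambda,\varepsilon,a,d),$$ and $\eta^*(\tilde a,\varepsilon,\lambda)=\min\{Q(\lambda,\varepsilon,\tilde a),\frac1{2\lambda}\}$. Then $\eta^*(\tilde a,\varepsilon,\lambda)>0$, and for every $X\in\mathbb{R}^{n\times p}$ with $\|X^\top X-I_p\|\le\varepsilon$ and every skew-symmetric $A\in\mathbb{R}^{n\times n}$ with $\|AX\|\le\tilde a$, the quantity $$\eta(X)=\min\left\{\frac{\lambda d(1-d)+\sqrt{\lambda^2d^2(1-d)^2+g^2(\varepsilon-d)}}{g^2},\ \frac{1}{2\lambda}\right\},$$ where $g=\|AX+\lambda X(X^\top X-I_p)\|$ and $d=\|X^\top X-I_p\|$ (first term interpreted as $+\infty$ when $g=0$), satisfies $\eta(X)\ge\eta^*(\tilde a,\varepsilon,\lambda)$.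
   Context: $\|\cdot\|$ denotes the Frobenius norm. $\eta(X)$ is the safeguard step size guaranteeing that $X-\eta(AX+\lambda X(X^\top X-I_p))$ stays in $\{\|Y^\top Y-I_p\|\le\varepsilon\}$ for all $\eta\le\eta(X)$. *)

(* Defs.v *)
From HB Require Import structures.
From mathcomp Require Import all_boot all_order all_algebra.
From mathcomp Require Import classical_sets reals.
Set Implicit Arguments. Unset Strict Implicit. Unset Printing Implicit Defensive.
Import Order.TTheory GRing.Theory Num.Theory.
Local Open Scope ring_scope.
Local Open Scope classical_set_scope.

Definition frob {R : realType} {m n : nat} (M : 'M[R]_(m, n)) : R :=
  Num.sqrt (\sum_(i < m) \sum_(j < n) M i j ^+ 2).

Definition Kfun {R : realType} (lam eps a d : R) : R :=
  (lam * (1 - eps) * d + a * Num.sqrt ((eps - d) / 2)) /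
  (a ^+ 2 + lam ^+ 2 * (1 + eps) * d ^+ 2).

Definition Qfun {R : realType} (lam eps at_ : R) : R :=
  inf [set k | exists a d : R,
         [/\ 0 < a, a <= at_, 0 < d, d <= eps & k = Kfun lam eps a d]].

Definition eta_star {R : realType} (at_ eps lam : R) : R :=
  Num.min (Qfun lam eps at_) (1 / (2 * lam)).

(* safeguard step size eta(X); first term is +oo when g = 0 *)
Definition eta_X {R : realType} {n p : nat} (A : 'M[R]_n) (X : 'M[R]_(n, p))
    (lam eps : R) : R :=
  let D := X^T *m X - 1%:M in
  let g := frob (A *m X + lam *: (X *m D)) in
  let d := frob D in
  if g == 0 then 1 / (2 * lam)
  else Num.min ((lam * d * (1 - d)
                 + Num.sqrt (lam ^+ 2 * d ^+ 2 * (1 - d) ^+ 2 + g ^+ 2 * (eps - d)))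
                / g ^+ 2)
               (1 / (2 * lam)).

(* Main.v *)
Require Import Defs.
From HB Require Import structures.
From mathcomp Require Import all_boot all_order all_algebra.
From mathcomp Require Import classical_sets reals.
From mathcomp Require Import ring lra.
Set Implicit Arguments. Unset Strict Implicit.
Import Order.TTheory GRing.Theory Num.Theory.
Local Open Scope ring_scope.


Section M.
Variable R : realType.


Lemma cs_sum (I : finType) (x y : I -> R) :
  (\sum_i x i * y i) ^+ 2 <= (\sum_i x i ^+ 2) * (\sum_i y i ^+ 2).
Proof.
set A := \sum_i x i ^+ 2; set B := \sum_i y i ^+ 2; set C := \sum_i x i * y i.
have A0 : 0 <= A by apply: sumr_ge0 => i _; rewrite sqr_ge0.
have B0 : 0 <= B by apply: sumr_ge0 => i _; rewrite sqr_ge0.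
have H : 0 <= \sum_i (B * x i - C * y i) ^+ 2 by apply: sumr_ge0 => i _; rewrite sqr_ge0.
have E : \sum_i (B * x i - C * y i) ^+ 2 = B^+2 * A - 2 * B * C * C + C^+2 * B.
  rewrite (eq_bigr (fun i => B^+2 * x i ^+ 2 + (- (2 * B * C)) * (x i * y i) + C^+2 * y i ^+ 2)); last first.
    by move=> i _; ring.
  by rewrite !big_split /= -!mulr_sumr -/A -/B -/C; ring.
rewrite E in H.
have [B0'|Bp] := eqVneq B 0.
  have y0 : forall i, y i = 0.
    move=> i; apply/eqP; rewrite -sqrf_eq0; apply/eqP.
    move/eqP: B0'; rewrite psumr_eq0 => [/allP Hy|j _]; last by rewrite sqr_ge0.
    by apply/eqP; apply: Hy; rewrite mem_index_enum.
  have -> : C = 0 by rewrite /C big1 // => i _; rewrite y0 mulr0.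
  by rewrite expr0n /= mulr_ge0.
have Bp' : 0 < B by rewrite lt_def Bp B0.
nra.
Qed.

Definition fr2 m n (M : 'M[R]_(m, n)) := \sum_i \sum_j M i j ^+ 2.
Definition ip m n (M N : 'M[R]_(m, n)) := \sum_i \sum_j M i j * N i j.

Lemma fr2_ge0 m n (M : 'M[R]_(m, n)) : 0 <= fr2 M.
Proof. by apply: sumr_ge0 => i _; apply: sumr_ge0 => j _; rewrite sqr_ge0. Qed.

Lemma frob_sq m n (M : 'M[R]_(m, n)) : frob M ^+ 2 = fr2 M.
Proof. by rewrite /frob sqr_sqrtr // fr2_ge0. Qed.

Lemma frob_ge0 m n (M : 'M[R]_(m, n)) : 0 <= frob M.
Proof. exact: sqrtr_ge0. Qed.

Lemma fr2_ip m n (M : 'M[R]_(m, n)) : fr2 M = ip M M.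
Proof. by apply: eq_bigr => i _; apply: eq_bigr => j _; rewrite expr2. Qed.

Lemma ip_tr m n (M N : 'M[R]_(m, n)) : ip M N = \tr (M^T *m N).
Proof.
rewrite /mxtrace /ip exchange_big /=; apply: eq_bigr => j _.
by rewrite mxE; apply: eq_bigr => i _; rewrite mxE.
Qed.

Lemma ip_pair m n (M N : 'M[R]_(m, n)) :
  ip M N = \sum_(q : 'I_m * 'I_n) M q.1 q.2 * N q.1 q.2.
Proof. by rewrite /ip pair_big. Qed.

Lemma cs_mx m n (M N : 'M[R]_(m, n)) : ip M N ^+ 2 <= fr2 M * fr2 N.
Proof. by rewrite !fr2_ip !ip_pair; apply: cs_sum. Qed.

Lemma fr2_addZ m n (M N : 'M[R]_(m, n)) c :
  fr2 (M + c *: N) = fr2 M + 2 * c * ip M N + c ^+ 2 * fr2 N.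
Proof.
rewrite /fr2 /ip mulr_sumr mulr_sumr -!big_split /=; apply: eq_bigr => i _.
rewrite mulr_sumr mulr_sumr -!big_split /=; apply: eq_bigr => j _.
rewrite !mxE; ring.
Qed.

Lemma fr2_mul m n k (M : 'M[R]_(m, n)) (N : 'M[R]_(n, k)) :
  fr2 (M *m N) <= fr2 M * fr2 N.
Proof.
rewrite /fr2 mulr_suml; apply: ler_sum => i _.
rewrite (exchange_big _ _ _ _ _ (fun j k => N j k ^+ 2)) mulr_sumr.
apply: ler_sum => j _; rewrite mxE.
exact: (cs_sum (fun l => M i l) (fun l => N l j)).
Qed.




Lemma cross0 n p (X : 'M[R]_(n, p)) (A : 'M[R]_n) (D : 'M[R]_p) :
  A^T = - A -> D^T = D -> ip (A *m X) (X *m D) = 0.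
Proof.
move=> hA hD.
set M := X^T *m A *m X.
have hM : M^T = - M.
  by rewrite /M !trmx_mul trmxK hA mulNmx mulmxN mulmxA.
have E : ip (A *m X) (X *m D) = - \tr (M *m D).
  by rewrite ip_tr trmx_mul hA mulmxN mulNmx -!mulmxA raddfN /M !mulmxA.
have T : \tr (M *m D) = - \tr (M *m D).
  by rewrite -{1}mxtrace_tr trmx_mul hD hM mulmxN raddfN mxtrace_mulC.
rewrite E; have -> : \tr (M *m D) = 0 by lra.
by rewrite oppr0.
Qed.

Lemma fr2XD n p (X : 'M[R]_(n, p)) :
  let D := X^T *m X - 1%:M in fr2 (X *m D) = fr2 D + ip D (D *m D).
Proof.
move=> D.
have hD : D^T = D by rewrite /D linearB /= trmx_mul trmxK tr_scalar_mx.
have XX : X^T *m X = D + 1%:M by rewrite /D subrK.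
rewrite fr2_ip !ip_tr trmx_mul mulmxA -(mulmxA D^T) XX mulmxDr mulmx1 mulmxDl mxtraceD.
by rewrite fr2_ip ip_tr addrC -mulmxA.
Qed.

Lemma ipDDD m (D : 'M[R]_m) : ip D (D *m D) <= frob D ^+ 3.
Proof.
have h1 := cs_mx D (D *m D).
have h2 := fr2_mul D D.
have f0 := fr2_ge0 D.
have d0 := frob_ge0 D.
have fs := frob_sq D.
set x := ip D (D *m D) in h1 *.
have h3 : x ^+ 2 <= (frob D ^+ 3) ^+ 2.
  apply: (le_trans h1); rewrite -fs.
  have := ler_wpM2l (fr2_ge0 D) h2; rewrite -fs => h4.
  apply: (le_trans h4); rewrite -!exprM /=; rewrite -!exprD; done.
have d3 : 0 <= frob D ^+ 3 by rewrite exprn_ge0.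
nra.
Qed.
End M.

Section Rl.
Variable R : realType.

Lemma sqrt_le_of (x y : R) : 0 <= y -> x <= y ^+ 2 -> Num.sqrt x <= y.
Proof.
move=> y0 h; rewrite -(ger0_norm y0) -sqrtr_sqr ler_sqrt //; exact: sqr_ge0.
Qed.

Lemma le_sqrt_of (x y : R) : 0 <= x -> x ^+ 2 <= y -> x <= Num.sqrt y.
Proof.
move=> x0 h; have y0 : 0 <= y by apply: le_trans h; exact: sqr_ge0.
by rewrite -(ger0_norm x0) -sqrtr_sqr ler_sqrt.
Qed.

Lemma div_cmp (N NT g2 Den : R) : 0 <= N -> N <= NT -> 0 < g2 -> g2 <= Den ->
  N / Den <= NT / g2.
Proof.
move=> N0 NNT g0 gD; have D0 : 0 < Den by apply: lt_le_trans gD.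
rewrite ler_pdivrMr // mulrAC ler_pdivlMr //; nra.
Qed.

Lemma keyK (lam eps at_ a d g : R) :
  0 < lam -> 0 < eps -> eps < 1 -> 0 < at_ -> 0 <= a -> a <= at_ ->
  0 <= d -> d <= eps -> 0 < g -> a ^+ 2 <= g ^+ 2 ->
  g ^+ 2 <= a ^+ 2 + lam ^+ 2 * (1 + eps) * d ^+ 2 ->
  exists a' d', [/\ 0 < a', a' <= at_, 0 < d', d' <= eps &
    Kfun lam eps a' d' <=
    (lam * d * (1 - d)
       + Num.sqrt (lam ^+ 2 * d ^+ 2 * (1 - d) ^+ 2 + g ^+ 2 * (eps - d)))
      / g ^+ 2].
Proof.
move=> l0 e0 e1 t0 a0 aat d0 de g0 ag gu.
set NT := _ + Num.sqrt _.
have g20 : 0 < g ^+ 2 by rewrite exprn_gt0.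
have sq0 : 0 <= Num.sqrt (lam ^+ 2 * d ^+ 2 * (1 - d) ^+ 2 + g ^+ 2 * (eps - d)).
  exact: sqrtr_ge0.
have NT1 : lam * d * (1 - d) <= NT by rewrite /NT lerDl.
have [a00|an0] := eqVneq a 0; first subst a.
  have dp : 0 < d.
    rewrite lt_def d0 andbT; apply/eqP => d00; move: gu; rewrite d00; nra.
  have [dee|dne] := eqVneq d eps.
    exists at_, d; split => //; rewrite /Kfun; apply: div_cmp.
    - rewrite dee subrr mul0r sqrtr0 mulr0 addr0; apply: mulr_ge0 => //; nra.
    - rewrite dee subrr mul0r sqrtr0 mulr0 addr0; apply: le_trans NT1; rewrite -dee; nra.
    - done.
    - move: gu; rewrite expr0n /= add0r; have := sqr_ge0 at_; lra.
  have dlt : d < eps by rewrite lt_def eq_sym dne de.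
  set s := Num.sqrt ((eps - d) / 2).
  have s0 : 0 < s by rewrite sqrtr_gt0; apply: divr_gt0 => //; rewrite subr_gt0.
  have ss : s ^+ 2 = (eps - d) / 2 by rewrite sqr_sqrtr // ltW // -sqrtr_gt0.
  set a' := Num.min at_ (lam * d * s).
  have a'1 : a' <= at_ by rewrite ge_min lexx.
  have a'2 : a' <= lam * d * s by rewrite ge_min lexx orbT.
  have a'0 : 0 < a' by rewrite lt_min t0 /= !mulr_gt0.
  exists a', d; split => //; rewrite /Kfun -/s; apply: div_cmp.
  - apply: addr_ge0; [apply: mulr_ge0 => //; nra | apply: mulr_ge0 => //; exact: ltW].
  - apply: le_trans NT1.
    have : a' * s <= lam * d * s ^+ 2 by rewrite expr2 mulrA ler_pM2r.
    rewrite ss; nra.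
  - done.
  - move: gu; rewrite expr0n /= add0r; have := sqr_ge0 a'; lra.
have ap : 0 < a by rewrite lt_def an0 a0.
have [d00|dn0] := eqVneq d 0.
  move: gu NT1; rewrite /NT d00 expr0n /= mulr0 addr0 subr0 mulr0 mul0r add0r mulr0 mul0r add0r subr0 => gu _.
  have ga : g = a by apply/eqP; rewrite -(eqrXn2 (n := 2)) //; [apply/eqP; apply: le_anti; rewrite gu ag | exact: ltW].
  set se := Num.sqrt eps.
  have se0 : 0 < se by rewrite sqrtr_gt0.
  set d' := Num.min eps (a * se / (4 * lam)).
  have d'1 : d' <= eps by rewrite ge_min lexx.
  have d'2 : d' <= a * se / (4 * lam) by rewrite ge_min lexx orbT.
  have d'0 : 0 < d' by rewrite lt_min e0 /= divr_gt0 // ?mulr_gt0.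
  have d'3 : lam * d' <= a * se / 4.
    by move: d'2; rewrite ler_pdivlMr ?mulr_gt0 // => h; rewrite ler_pdivlMr //; nra.
  have sb : Num.sqrt ((eps - d') / 2) <= 3 / 4 * se.
    apply: sqrt_le_of; first by apply: mulr_ge0; [lra | exact: ltW].
    rewrite exprMn sqr_sqrtr; last exact: ltW.
    have : 0 < d' by []; lra.
  exists a, d'; split => //; rewrite /Kfun; apply: div_cmp.
  - apply: addr_ge0; [apply: mulr_ge0 => //; [nra | exact: ltW] | apply: mulr_ge0 => //; exact: sqrtr_ge0].
  - apply: (@le_trans _ _ (a * se)).
      have : a * Num.sqrt ((eps - d') / 2) <= a * (3 / 4 * se) by rewrite ler_pM2l.
      have : lam * (1 - eps) * d' <= lam * d' by have := mulr_gt0 (mulr_gt0 l0 e0) d'0; nra.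
      lra.
    apply: le_sqrt_of; first by apply: mulr_ge0 => //; exact: ltW.
    rewrite exprMn sqr_sqrtr ?ga //; exact: ltW.
  - done.
  - rewrite ga lerDl; apply: mulr_ge0; [apply: mulr_ge0; [exact: sqr_ge0 | lra] | exact: sqr_ge0].
have dp : 0 < d by rewrite lt_def dn0 d0.
exists a, d; split => //; rewrite /Kfun; apply: div_cmp => //.
- apply: addr_ge0; [apply: mulr_ge0 => //; nra | apply: mulr_ge0 => //; exact: sqrtr_ge0].
- have ed : 0 <= eps - d by lra.
  rewrite /NT; apply: lerD; first by have := mulr_ge0 (mulr_ge0 (ltW l0) d0) ed; nra.
  apply: le_sqrt_of; first by apply: mulr_ge0 => //; exact: sqrtr_ge0.
  rewrite exprMn sqr_sqrtr; last by apply: divr_ge0 => //; lra.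
  have : 0 <= lam ^+ 2 * d ^+ 2 * (1 - d) ^+ 2.
    by apply: mulr_ge0; [apply: mulr_ge0|]; exact: sqr_ge0.
  have : 0 <= eps - d by lra.
  nra.
Qed.


Definition mlow (lam eps at_ : R) :=
  Num.min (Num.min (lam * (1 - eps) / (lam ^+ 2 * (1 + eps) * eps))
                   (Num.sqrt (eps / 4) / at_))
          ((lam * (1 - eps) * eps / 2) / (at_ ^+ 2 + lam ^+ 2 * (1 + eps) * eps ^+ 2)).

Lemma mlow_gt0 (lam eps at_ : R) :
  0 < lam -> 0 < eps -> eps < 1 -> 0 < at_ -> 0 < mlow lam eps at_.
Proof.
move=> l0 e0 e1 t0.
have e1' : 0 < 1 - eps by lra.
have c0 : 0 < lam ^+ 2 * (1 + eps) by rewrite mulr_gt0 ?exprn_gt0 //; lra.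
have q1 : 0 < lam * (1 - eps) by rewrite mulr_gt0.
have q2 : 0 < lam ^+ 2 * (1 + eps) * eps by rewrite mulr_gt0.
have q3 : 0 < Num.sqrt (eps / 4) by rewrite sqrtr_gt0 divr_gt0.
have q4 : 0 < at_ ^+ 2 + lam ^+ 2 * (1 + eps) * eps ^+ 2.
  by rewrite addr_gt0 ?exprn_gt0 // mulr_gt0 ?exprn_gt0.
have q5 : 0 < lam * (1 - eps) * eps / 2 by rewrite divr_gt0 ?mulr_gt0.
rewrite /mlow !lt_min; apply/andP; split; [apply/andP; split|]; exact: divr_gt0.
Qed.

Lemma K_lb (lam eps at_ a d : R) :
  0 < lam -> 0 < eps -> eps < 1 -> 0 < at_ -> 0 < a -> a <= at_ ->
  0 < d -> d <= eps -> mlow lam eps at_ <= Kfun lam eps a d.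
Proof.
move=> l0 e0 e1 t0 a0 aat d0 de.
have e1' : 0 < 1 - eps by lra.
set c := lam ^+ 2 * (1 + eps).
have c0 : 0 < c by rewrite mulr_gt0 ?exprn_gt0 //; lra.
set al := lam * (1 - eps).
have al0 : 0 < al by rewrite mulr_gt0.
set s := Num.sqrt ((eps - d) / 2).
have s0 : 0 <= s by exact: sqrtr_ge0.
have Den0 : 0 < a ^+ 2 + c * d ^+ 2.
  by rewrite ltr_wpDr ?exprn_gt0 // mulr_ge0 ?exprn_ge0 // ltW.
rewrite /Kfun -/c -/al -/s ler_pdivlMr //.
have [dh|dh] := lerP d (eps / 2).
  set s0' := Num.sqrt (eps / 4).
  have ss : s0' <= s by rewrite ler_sqrt; [lra | apply: divr_ge0; lra].
  set m1 := Num.min (al / (c * eps)) (s0' / at_).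
  have hm2 : m1 <= s0' / at_ by rewrite /m1 ge_min lexx orbT.
  have hm1 : m1 <= al / (c * eps) by rewrite /m1 ge_min lexx.
  have h1 : m1 * (c * eps) <= al by move: hm1; rewrite ler_pdivlMr // mulr_gt0.
  have h2 : m1 * at_ <= s0' by move: hm2; rewrite ler_pdivlMr.
  have m10 : 0 < m1.
    rewrite lt_min; apply/andP; split; apply: divr_gt0 => //; [exact: mulr_gt0 | rewrite sqrtr_gt0; exact: divr_gt0].
  have : mlow lam eps at_ <= m1 by rewrite /mlow ge_min lexx.
  have hA : a ^+ 2 <= at_ * a by rewrite expr2 ler_pM2r.
  have hD : c * d ^+ 2 <= c * eps * d by rewrite expr2 -mulrA ler_pM2l // ler_pM2r.
  have : a * s0' <= a * s by rewrite ler_pM2l.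
  move=> h3 h4.
  have : m1 * (a ^+ 2 + c * d ^+ 2) <= m1 * (at_ * a + c * eps * d).
    by rewrite ler_pM2l // lerD.
  have : mlow lam eps at_ * (a ^+ 2 + c * d ^+ 2) <= m1 * (a ^+ 2 + c * d ^+ 2).
    by rewrite ler_pM2r.
  have : m1 * (at_ * a + c * eps * d) <= s0' * a + al * d.
    have -> : m1 * (at_ * a + c * eps * d) = (m1 * at_) * a + (m1 * (c * eps)) * d by ring.
    by apply: lerD; rewrite ler_pM2r.
  lra.
set m2 := (al * eps / 2) / (at_ ^+ 2 + c * eps ^+ 2).
have D2 : 0 < at_ ^+ 2 + c * eps ^+ 2 by rewrite ltr_wpDr ?exprn_gt0 // mulr_ge0 ?exprn_ge0 // ltW.
have : mlow lam eps at_ <= m2 by rewrite /mlow ge_min lexx orbT.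
have m20 : 0 < m2 by rewrite divr_gt0 // divr_gt0 // mulr_gt0.
have hm2 : m2 * (at_ ^+ 2 + c * eps ^+ 2) = al * eps / 2 by rewrite divfK // gt_eqF.
have hA : a ^+ 2 <= at_ ^+ 2 by rewrite ler_pXn2r // ?nnegrE ltW.
have hD : d ^+ 2 <= eps ^+ 2 by rewrite ler_pXn2r // ?nnegrE ltW // (lt_trans d0).
have : a ^+ 2 + c * d ^+ 2 <= at_ ^+ 2 + c * eps ^+ 2 by rewrite lerD // ler_pM2l.
move=> h1 h2.
have : mlow lam eps at_ * (a ^+ 2 + c * d ^+ 2) <= m2 * (a ^+ 2 + c * d ^+ 2).
  by rewrite ler_pM2r.
have : m2 * (a ^+ 2 + c * d ^+ 2) <= m2 * (at_ ^+ 2 + c * eps ^+ 2) by rewrite ler_pM2l.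
have : al * eps / 2 <= al * d by rewrite ler_pdivrMr //; nra.
have : 0 <= a * s by rewrite mulr_ge0 // ltW.
lra.
Qed.

End Rl.

Theorem lemma4 (R : realType) (n p : nat) (eps lam at_ : R) :
  (1 <= p)%N -> (p <= n)%N ->
  0 < eps -> eps < 1 -> 0 < lam -> 0 < at_ ->
  0 < eta_star at_ eps lam /\
  forall (X : 'M[R]_(n, p)) (A : 'M[R]_n),
    frob (X^T *m X - 1%:M) <= eps ->
    A^T = - A ->
    frob (A *m X) <= at_ ->
    eta_star at_ eps lam <= eta_X A X lam eps.
Proof.
move=> p1 pn e0 e1 l0 t0.
have hb : 0 < 1 / (2 * lam) by rewrite divr_gt0 // mulr_gt0.
have Qlb : mlow lam eps at_ <= Qfun lam eps at_.
  apply: lb_le_inf.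
    exists (Kfun lam eps at_ eps), at_, eps; split => //; exact: lexx.
  move=> k [a [d [a0 aa d0 de ->]]]; exact: K_lb.
have Qge : forall a d, 0 < a -> a <= at_ -> 0 < d -> d <= eps ->
    Qfun lam eps at_ <= Kfun lam eps a d.
  move=> a d a0 aa d0 de; apply: (ge_inf (E := [set k | exists a d : R,
         [/\ 0 < a, a <= at_, 0 < d, d <= eps & k = Kfun lam eps a d]])).
    exists (mlow lam eps at_) => k [a1 [d1 [a10 aa1 d10 de1 ->]]]; exact: K_lb.
  by exists a, d.
split.
  rewrite /eta_star lt_min hb andbT.
  exact: lt_le_trans (mlow_gt0 l0 e0 e1 t0) Qlb.
move=> X A hD hA ha.
rewrite /eta_X.
set D := X^T *m X - 1%:M.
have DT : D^T = D by rewrite /D linearB /= trmx_mul trmxK tr_scalar_mx.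
set g := frob _.
set d := frob D.
have hmin : eta_star at_ eps lam <= 1 / (2 * lam) by rewrite /eta_star ge_min lexx orbT.
case: ifP => [_ //|gn0].
rewrite le_min hmin andbT /eta_star ge_min; apply/orP; left.
set a := frob (A *m X).
have a0 : 0 <= a := frob_ge0 _.
have d0 : 0 <= d := frob_ge0 _.
have g0 : 0 < g by rewrite lt_def gn0 frob_ge0.
have g2 : g ^+ 2 = a ^+ 2 + lam ^+ 2 * (fr2 D + ip D (D *m D)).
  by rewrite /g frob_sq fr2_addZ cross0 // mulr0 addr0 frob_sq fr2XD.
have i3 := ipDDD D.
have f0 := fr2_ge0 (X *m D).
rewrite fr2XD -/D in f0.
have fd : fr2 D = d ^+ 2 by rewrite /d frob_sq.
rewrite fd in g2 f0.
have ag : a ^+ 2 <= g ^+ 2.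
  by rewrite g2 lerDl; apply: mulr_ge0 => //; exact: sqr_ge0.
have gu : g ^+ 2 <= a ^+ 2 + lam ^+ 2 * (1 + eps) * d ^+ 2.
  rewrite g2 lerD2l -mulrA ler_pM2l ?exprn_gt0 //.
  have : d ^+ 3 <= eps * d ^+ 2.
    by rewrite exprSr mulrC; apply: ler_wpM2r => //; exact: sqr_ge0.
  rewrite -/d in i3; lra.
have [a' [d' [a'0 a'a d'0 d'e hK]]] := keyK l0 e0 e1 t0 a0 ha d0 hD g0 ag gu.
exact: le_trans (Qge _ _ a'0 a'a d'0 d'e) hK.
Qed.
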